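(* Let $n,k,r$ be integers with $k,r\geq 2$, $n\geq 2k$ and $k<r$. Then every vertex-$k$-maximal $r$-uniform hypergraph $H$ on $n$ vertices satisfies $|E(H)|\leq \binom{n}{r}-\binom{n-k}{r}$ (which equals $\binom{n}{r}-\binom{n-k}{r}+(\frac{n}{k}-2)\binom{k}{r}$ since $\binom{k}{r}=0$).
   Context: Binomial coefficients satisfy $\binom{a}{b}=0$ when $b>a$. A hypergraph $H=(V,E)$ consists of a finite vertex set $V$ and a set $E$ of non-empty subsets of $V$ (edges); it is $r$-uniform if all edges have exactly $r$ elements. The complement $H^c$ has as edges the $r$-subsets of $V$ not in $E$. A subhypergraph is $H'=(V',E')$ with $V'\subseteq V$, $E'\subseteq E$. $H+e=(V,E\cup\{e\})$ for $e\in E(H^c)$. $H-Y$ is the hypergraph induced on $V\setminus Y$ (keeping edges contained in $V\setminus Y$). Connectedness is defined via paths (alternating sequences of distinct vertices and distinct edges with consecutive vertices in the intermediate edge). A vertex-cut is a set $X$ with $H-X$ disconnected. $\kappa(H)$ is the minimum size of a vertex-cut if one exists, and $|V(H)|-1$ otherwise. $\overline{\kappa}(H)=\max\{\kappa(H'): H'\subseteq H\}$. An $r$-uniform hypergraph $H$ is vertex-$k$-maximal if $\overline{\kappa}(H)\leq k$ but $\overline{\kappa}(H+e)\geq k+1$ for every $e\in E(H^c)$. *)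

(* Defs.v *)
From Stdlib Require Import ClassicalEpsilon.
From mathcomp Require Import all_boot.
Set Implicit Arguments. Unset Strict Implicit. Unset Printing Implicit Defensive.

Definition pb (P : Prop) : bool :=
  if excluded_middle_informative P then true else false.

Section Hypergraphs.
Variable V : finType.

Record hg := Hg { hV : {set V}; hE : {set {set V}} }.

Definition wf_hg (H : hg) : Prop :=
  forall e, e \in hE H -> e != set0 /\ e \subset hV H.

Definition uniform (r : nat) (H : hg) : Prop :=
  forall e, e \in hE H -> #|e| = r.

(* A path from u to v: vertices u = x_0, x_1, ..., x_m = v (the list u :: vs),
   edges e_1, ..., e_m (the list es), all vertices distinct, all edges
   distinct, and x_{i-1}, x_i both lie in e_i. *)
Definition hpath (H : hg) (u v : V) : Prop :=
  exists (vs : seq V) (es : seq {set V}),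
    [/\ size es = size vs, last u vs = v, uniq (u :: vs) && uniq es,
        all (fun e => e \in hE H) es &
        forall i, i < size vs ->
          nth u (u :: vs) i \in nth set0 es i /\ nth u vs i \in nth set0 es i].

Definition connected (H : hg) : Prop :=
  forall u v, u \in hV H -> v \in hV H -> hpath H u v.

Definition hdel (H : hg) (Y : {set V}) : hg :=
  Hg (hV H :\: Y) [set e in hE H | e \subset hV H :\: Y].

Definition vertex_cut (H : hg) (X : {set V}) : Prop :=
  X \subset hV H /\ ~ connected (hdel H X).

Definition kappa (H : hg) : nat :=
  if [exists X, pb (vertex_cut H X)]
  then \big[minn/#|V|]_(X : {set V} | pb (vertex_cut H X)) #|X|
  else #|hV H| - 1.

Definition subhg (W : {set V}) (F : {set {set V}}) (H : hg) : bool :=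
  [&& W \subset hV H, F \subset hE H & [forall e in F, e \subset W]].

Definition kappa_bar (H : hg) : nat :=
  \max_(W : {set V}) \max_(F : {set {set V}} | subhg W F H) kappa (Hg W F).

Definition hadd (H : hg) (e : {set V}) : hg := Hg (hV H) (e |: hE H).

Definition compl_edge (r : nat) (H : hg) (e : {set V}) : Prop :=
  [/\ e \subset hV H, #|e| = r & e \notin hE H].

Definition vertex_k_maximal (k r : nat) (H : hg) : Prop :=
  kappa_bar H <= k /\
  forall e, compl_edge r H e -> k.+1 <= kappa_bar (hadd H e).

End Hypergraphs.

(* Main.v *)
Require Import Defs.
From mathcomp Require Import all_boot zify.
From Stdlib Require Import Classical ClassicalEpsilon.
Set Implicit Arguments. Unset Strict Implicit. Unset Printing Implicit Defensive.

Section Paths.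
Variable V : finType.

Definition hp (G : hg V) (u v : V) (vs : seq V) (es : seq {set V}) : Prop :=
    [/\ size es = size vs, last u vs = v, uniq (u :: vs) && uniq es,
        all (fun e => e \in hE G) es &
        forall i, i < size vs ->
          nth u (u :: vs) i \in nth set0 es i /\ nth u vs i \in nth set0 es i].

Lemma hpathE G u v : hpath G u v <-> exists vs es, hp G u v vs es.
Proof. by []. Qed.

Lemma last_take (u : V) vs i : i <= size vs -> last u (take i vs) = nth u (u :: vs) i.
Proof.
elim: vs u i => [|x s IH] u [|i] //= hi.
rewrite IH // (set_nth_default u) //.
Qed.

Lemma hp_trunc G u v vs es i : hp G u v vs es -> i <= size vs ->
  hp G u (nth u (u :: vs) i) (take i vs) (take i es).
Proof.
case=> hs hl /andP[hu1 hu2] ha hP hi; split.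
- by rewrite !size_takel // hs.
- exact: last_take.
- apply/andP; split; last exact: take_uniq.
  by have := take_uniq i.+1 hu1.
- apply/allP => e /mem_take he; exact: (allP ha).
- move=> j; rewrite size_takel // => hj.
  have := hP j (leq_trans hj hi).
  rewrite !nth_take //.
  by case: j hj => //= j hj; rewrite nth_take // ltnW.
Qed.

Lemma hp_ext G u v vs es z e : hp G u v vs es -> z \notin u :: vs -> e \notin es ->
  e \in hE G -> v \in e -> z \in e -> hp G u z (rcons vs z) (rcons es e).
Proof.
case=> hs hl /andP[hu1 hu2] ha hP hz he heE hv hze; split.
- by rewrite !size_rcons hs.
- exact: last_rcons.
- by rewrite -rcons_cons !rcons_uniq hz he hu1 hu2.
- by rewrite all_rcons heE.
- move=> j; rewrite size_rcons ltnS leq_eqVlt => /orP[/eqP ->|hj].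
    rewrite -rcons_cons !nth_rcons /= hs ltnn eqxx ltnSn.
    split=> //; rewrite (_ : size vs = (size (u :: vs)).-1) // nth_last /= hl //.
  rewrite -rcons_cons !nth_rcons /= hs.
  rewrite hj ltnS (ltnW hj); exact: hP.
Qed.

Lemma notin_take_index (T : eqType) (e : T) s : e \notin take (index e s) s.
Proof.
apply/negP => h.
have := cat_take_drop (index e s) s.
move=> hc.
have : index e s = index e (take (index e s) s).
  by rewrite -{1}hc index_cat h.
move=> he; have := index_mem e (take (index e s) s); rewrite h => hlt.
move: hlt; rewrite -he size_take.
case: ifP => [_|]; first by rewrite ltnn.
by move=> /negbT; rewrite -leqNgt => h1 h2; have := leq_ltn_trans h1 h2; rewrite ltnn.
Qed.

Lemma hpath_ext (G : hg V) (u w z : V) (e : {set V}) : hpath G u w -> e \in hE G -> w \in e -> z \in e ->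
  hpath G u z.
Proof.
move=> [vs [es hpw]] heE hw hz.
have [hs _ _ _ hP] := hpw.
case: (boolP (z \in u :: vs)) => hzin.
  set i := index z (u :: vs).
  have hi : i <= size vs by have := index_mem z (u :: vs); rewrite hzin /= ltnS.
  have <- : nth u (u :: vs) i = z := nth_index u hzin.
  apply/hpathE; exists (take i vs), (take i es); exact: (hp_trunc hpw hi).
case: (boolP (e \in es)) => hein.
  set i := index e es.
  have hi : i < size vs by rewrite -hs index_mem.
  have [h1 _] := hP i hi.
  rewrite nth_index // in h1.
  apply/hpathE; exists (rcons (take i vs) z), (rcons (take i es) e).
  apply: (hp_ext (hp_trunc hpw (ltnW hi))) => //.
  - apply: contra hzin; rewrite -[_ :: take _ _]/(take i.+1 (u :: vs)); exact: mem_take.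
  - exact: notin_take_index.
apply/hpathE; exists (rcons vs z), (rcons es e).
have [_ hl _ _ _] := hpw.
by apply: (hp_ext hpw) => //; rewrite hl.
Qed.

End Paths.

Unset Implicit Arguments.
Lemma bin_split m j s : 0 < s -> 'C(m - j, s.+1) = 'C(m - j.+1, s.+1) + 'C(m - j.+1, s).
Proof.
move=> hs; case h: (m - j) => [|t].
  have -> : m - j.+1 = 0 by lia.
  by case: s hs.
have -> : m - j.+1 = t by lia.
by rewrite binS.
Qed.

Lemma bin_super p q s : 0 < s -> 'C(p, s) + 'C(q, s) <= 'C(p + q, s).
Proof.
case: s => // t _; elim: q => [|q IH]; first by rewrite addn0 bin0n addn0.
rewrite addnS !binS.
have := leq_bin2l t (leq_addl p q).
lia.
Qed.

Lemma arith_y a b y s : 0 < s ->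
  'C(a + b - y, s.+1) + 'C(a, s.+1) + 'C(b, s.+1) <=
  'C(a + b, s.+1) + 'C(a - y, s.+1) + 'C(b - y, s.+1).
Proof.
move=> hs; elim: y => [|y IH]; first by rewrite !subn0.
move: IH; rewrite (bin_split (a + b) y s hs) (bin_split a y s hs) (bin_split b y s hs).
have h1 := bin_super (a - y.+1) (b - y.+1) s hs.
have h2 : 'C(a - y.+1 + (b - y.+1), s) <= 'C(a + b - y.+1, s) by apply: leq_bin2l; lia.
lia.
Qed.

Lemma arith a b x k r : x <= k -> 1 < r ->
  'C(a + b + x - k, r) + 'C(a, r) + 'C(b, r) <=
  'C(a + b, r) + 'C(a + x - k, r) + 'C(b + x - k, r).
Proof.
move=> hx; case: r => [|[|s]] // _.
have -> : a + b + x - k = a + b - (k - x) by lia.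
have -> : a + x - k = a - (k - x) by lia.
have -> : b + x - k = b - (k - x) by lia.
exact: arith_y.
Qed.

Set Implicit Arguments.
Lemma pbP (P : Prop) : reflect P (pb P).
Proof. by rewrite /pb; case: excluded_middle_informative => h; constructor. Qed.

Lemma cardsU_disj (T : finType) (P Q : {set T}) :
  (forall x, x \in P -> x \in Q -> False) -> #|P :|: Q| = #|P| + #|Q|.
Proof.
move=> h; rewrite cardsU.
have -> : P :&: Q = set0.
  by apply/setP => x; rewrite !inE; apply/negP => /andP[hp hq]; exact: h x hp hq.
by rewrite cards0 subn0.
Qed.

Section Main.
Variable V : finType.

Definition Nset (r : nat) (G : hg V) : {set {set V}} :=
  [set e : {set V} | [&& e \subset hV G, #|e| == r & e \notin hE G]].

Lemma cardEN r (G : hg V) : wf_hg G -> uniform r G ->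
  #|hE G| + #|Nset r G| = 'C(#|hV G|, r).
Proof.
move=> wfG uG; rewrite -cards_draws.
set S := [set _ | _ & _].
have hES : hE G \subset S.
  apply/subsetP => e he; rewrite inE (wfG e he).2 /=; apply/eqP; exact: uG.
have -> : Nset r G = S :\: hE G.
  by apply/setP => e; rewrite !inE; case: (e \in hE G); rewrite ?andbT ?andbF.
by rewrite -(cardsID (hE G) S) (setIidPr hES).
Qed.

Lemma kb_mono (G1 G2 : hg V) : hV G1 \subset hV G2 -> hE G1 \subset hE G2 ->
  kappa_bar G1 <= kappa_bar G2.
Proof.
move=> hV12 hE12; rewrite /kappa_bar.
apply/bigmax_leqP => W _; apply/bigmax_leqP => F hF.
apply: leq_trans (leq_bigmax W).
apply: (@leq_bigmax_cond _ (fun F => subhg W F G2) (fun F => kappa (Hg W F)) F).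
move: hF => /and3P[h1 h2 h3]; apply/and3P; split => //.
- exact: subset_trans h1 hV12.
- exact: subset_trans h2 hE12.
Qed.

Lemma kappa_le_kb (G : hg V) : wf_hg G -> kappa G <= kappa_bar G.
Proof.
case: G => VV EE wfG; rewrite /kappa_bar.
apply: leq_trans (leq_bigmax VV).
apply: (@leq_bigmax_cond _ (fun F => subhg VV F (Hg VV EE)) (fun F => kappa (Hg VV F)) EE).
apply/and3P; split => //=; apply/forallP => e; apply/implyP => he.
exact: (wfG e he).2.
Qed.

End Main.

Lemma small_case (V : finType) r (G : hg V) : wf_hg G -> uniform r G ->
  #|hE G| <= 'C(#|hV G|, r).
Proof. move=> wfG uG; rewrite -(cardEN wfG uG); exact: leq_addr. Qed.

Lemma get_cut (V : finType) k r (G : hg V) : 1 < r -> k + r <= #|hV G| ->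
  kappa G <= k -> exists X, vertex_cut G X /\ #|X| <= k.
Proof.
move=> hr hn hk.
have : [exists X, pb (vertex_cut G X) && (#|X| <= k)].
  apply: contraT => hno; move: hk; rewrite /kappa; case: ifP => _ hk; last by lia.
  suff : k < \big[minn/#|V|]_(X | pb (vertex_cut G X)) #|X| by rewrite ltnNge hk.
  elim/big_ind: _ => [|x y hx hy|X hX].
  - have := max_card (hV G); lia.
  - by rewrite leq_min hx hy.
  - rewrite ltnNge; apply/negP => hle; move/negP: hno; apply; apply/existsP; exists X; by rewrite hX hle.
by move=> /existsP[X /andP[/pbP h1 h2]]; exists X.
Qed.

Lemma sub_UX (V : finType) (A X W e : {set V}) :
  (forall z, z \in W -> z \notin X) -> e \subset A :|: X -> e \subset W -> e \subset A.
Proof.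
move=> hWX heAX heW; apply/subsetP => z ze.
have := subsetP heAX z ze; rewrite inE => /orP[//|zX].
by have := hWX z (subsetP heW z ze); rewrite zX.
Qed.

Lemma main_lemma (V : finType) k r : k < r -> 1 < r -> forall m (G : hg V),
  #|hV G| <= m -> wf_hg G -> uniform r G -> kappa_bar G <= k ->
  #|hE G| + 'C(#|hV G| - k, r) <= 'C(#|hV G|, r).
Proof.
move=> hkr hr m; elim: m => [|m IH] G hm wfG uG hkb.
  rewrite bin_small ?addn0; last by lia.
  exact: small_case.
have [hsm|hbig] := ltnP #|hV G| (k + r).
  rewrite bin_small ?addn0; last by lia.
  exact: small_case.
have [X [[hXG hnc] hXk]] := get_cut hr hbig (leq_trans (kappa_le_kb wfG) hkb).
set G' := hdel G X.
set W := hV G :\: X.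
have [u [v [hu hv hnp]]] : exists u v, [/\ u \in W, v \in W & ~ hpath G' u v].
  apply: NNPP => hn; apply: hnc => u v hu hv; apply: NNPP => hp; apply: hn.
  by exists u, v; split.
set A := [set w in W | pb (hpath G' u w)].
set B := W :\: A.
have uA : u \in A.
  rewrite inE hu; apply/pbP; exists [::], [::]; split => //.
have vB : v \in B.
  rewrite in_setD hv andbT; apply/negP; rewrite inE => /andP[_ /pbP]; exact: hnp.
have hWX : forall z, z \in W -> z \notin X by move=> z; rewrite inE => /andP[].
have hAW : A \subset W by apply/subsetP => z; rewrite inE => /andP[].
have hBW : B \subset W by apply: subsetDl.
have hWG : W \subset hV G by apply: subsetDl.
have hAB : forall z, z \in A -> z \in B -> False.
  by move=> z zA; rewrite inE zA.
have cross : forall e, e \in hE G -> e \subset W -> (e \subset A) || (e \subset B).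
  move=> e eG eW.
  have eG' : e \in hE G' by rewrite inE eG eW.
  case: (boolP [exists w in e, w \in A]) => [/existsP [w /andP[we wA]] | hno].
    apply/orP; left; apply/subsetP => z ze; rewrite inE (subsetP eW z ze) /=.
    move: wA; rewrite inE => /andP[_ /pbP hw]; apply/pbP; exact: hpath_ext hw eG' we ze.
  apply/orP; right; apply/subsetP => z ze; rewrite inE (subsetP eW z ze) andbT.
  apply/negP => zA; move/negP: hno; apply; apply/existsP; exists z; by rewrite ze zA.
have hcW : #|W| = #|A| + #|B|.
  by rewrite -(cardsID A W) (setIidPr hAW).
have hcG : #|hV G| = #|X| + #|W|.
  by rewrite -(cardsID X (hV G)) (setIidPr hXG).
have hcAX : #|A :|: X| = #|A| + #|X|.
  apply: cardsU_disj => z zA zX; have := hWX z (subsetP hAW z zA); by rewrite zX.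
have hcBX : #|B :|: X| = #|B| + #|X|.
  apply: cardsU_disj => z zB zX; have := hWX z (subsetP hBW z zB); by rewrite zX.
have hA0 : 0 < #|A| by apply/card_gt0P; exists u.
have hB0 : 0 < #|B| by apply/card_gt0P; exists v.
set GA := Hg (A :|: X) [set e in hE G | e \subset A :|: X].
set GB := Hg (B :|: X) [set e in hE G | e \subset B :|: X].
have subAX : A :|: X \subset hV G.
  by apply/subsetP => z; rewrite inE => /orP[zA|zX];
    [exact: subsetP hWG z (subsetP hAW z zA) | exact: subsetP hXG z zX].
have subBX : B :|: X \subset hV G.
  by apply/subsetP => z; rewrite inE => /orP[zA|zX];
    [exact: subsetP hWG z (subsetP hBW z zA) | exact: subsetP hXG z zX].
have wfA : wf_hg GA.
  by move=> e; rewrite inE => /andP[eG eAX]; split; [exact: (wfG e eG).1 | exact: eAX].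
have wfB : wf_hg GB.
  by move=> e; rewrite inE => /andP[eG eAX]; split; [exact: (wfG e eG).1 | exact: eAX].
have uA' : uniform r GA by move=> e; rewrite inE => /andP[eG _]; exact: uG.
have uB' : uniform r GB by move=> e; rewrite inE => /andP[eG _]; exact: uG.
have kbA : kappa_bar GA <= k.
  apply: leq_trans hkb; apply: kb_mono => //; apply/subsetP => e; rewrite inE => /andP[] //.
have kbB : kappa_bar GB <= k.
  apply: leq_trans hkb; apply: kb_mono => //; apply/subsetP => e; rewrite inE => /andP[] //.
have IHA := IH GA ltac:(rewrite /= hcAX; lia) wfA uA' kbA.
have IHB := IH GB ltac:(rewrite /= hcBX; lia) wfB uB' kbB.
have cA := cardEN wfA uA'.
have cB := cardEN wfB uB'.
have cG := cardEN wfG uG.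
rewrite /= hcAX in IHA cA; rewrite /= hcBX in IHB cB.
set Cr := [set e : {set V} | [&& e \subset W, #|e| == r, ~~ (e \subset A) & ~~ (e \subset B)]].
have hCr : 'C(#|A| + #|B|, r) <= 'C(#|A|, r) + 'C(#|B|, r) + #|Cr|.
  rewrite -hcW -(cards_draws W) -(cards_draws A) -(cards_draws B).
  apply: (@leq_trans #|[set e : {set V} | e \subset A & #|e| == r] :|:
     [set e : {set V} | e \subset B & #|e| == r] :|: Cr|).
    apply: subset_leq_card; apply/subsetP => e; rewrite !inE => /andP[eW er].
    by case: (boolP (e \subset A)) => eA; case: (boolP (e \subset B)) => eB;
      rewrite ?eW ?er ?eA ?eB ?orbT.
  rewrite !cardsU; lia.
have hN : #|Nset r GA| + #|Nset r GB| + #|Cr| <= #|Nset r G|.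
  rewrite -cardsU_disj; last first.
    move=> e; rewrite !inE => /and3P[eAX er _] /and3P[eBX _ _].
    have eX : e \subset X.
      apply/subsetP => z ze; have := subsetP eAX z ze; have := subsetP eBX z ze.
      rewrite /= !in_setU => /orP[zB|//] /orP[zA|//].
      by have := hAB z zA zB.
    have := subset_leq_card eX; rewrite (eqP er) => h.
    by have := leq_ltn_trans h (leq_ltn_trans hXk hkr); rewrite ltnn.
  rewrite -cardsU_disj; last first.
    move=> e; rewrite !inE => /orP[/and3P[eAX _ _]|/and3P[eBX _ _]] /and4P[eW _ eA eB].
    - by rewrite (sub_UX hWX eAX eW) in eA.
    - by rewrite (sub_UX hWX eBX eW) in eB.
  apply: subset_leq_card; apply/subsetP => e; rewrite !inE.
  move=> /orP[/orP[/and3P[eAX er eE]|/and3P[eBX er eE]]|/and4P[eW er eA eB]].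
  - rewrite (subset_trans eAX subAX) er /=; apply: contra eE => eG; by rewrite eG.
  - rewrite (subset_trans eBX subBX) er /=; apply: contra eE => eG; by rewrite eG.
  - rewrite (subset_trans eW hWG) er /=; apply/negP => eG.
    by have := cross e eG eW; rewrite (negbTE eA) (negbTE eB).
have ar := arith #|A| #|B| #|X| k r hXk hr.
rewrite hcG hcW in cG *.
have -> : #|X| + (#|A| + #|B|) = #|A| + #|B| + #|X| by rewrite addnC.
rewrite (_ : #|X| + (#|A| + #|B|) = #|A| + #|B| + #|X|) in cG; last by rewrite addnC.
clear -IHA IHB cA cB cG hCr hN ar.
move: (#|Cr|) hCr hN => c hCr hN.
move: (#|Nset r GA|) (#|Nset r GB|) (#|Nset r G|) cA cB hN cG => na nb ng cA cB hN cG.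
lia.
Qed.

Theorem theorem4p2 (V : finType) (n k r : nat) (H : hg V) :
  2 <= k -> 2 <= r -> 2 * k <= n -> k < r ->
  wf_hg H -> uniform r H -> #|hV H| = n ->
  vertex_k_maximal k r H ->
  #|hE H| <= 'C(n, r) - 'C(n - k, r).
Proof.
move=> hk hr hn hkr wfH uH hVn [hkb _].
have := main_lemma hkr hr (leqnn #|hV H|) wfH uH hkb.
rewrite hVn => h.
move: (#|hE H|) ('C(n, r)) ('C(n - k, r)) h => a b c h.
lia.
Qed.
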